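(* Let $p$ be a prime and $G=S^1\times C_p$. There exists a continuous $G$-equivariant map $f_3:S(V_3)\to S(W_3)$, where $V_3=V_{1,1}\oplus V_{p,1}\oplus V_{p^2,1}$ and $W_3=V_{p^3,0}\oplus V_{0,1}$.
   Context: $S^1=\{t\in\mathbb{C}:|t|=1\}$, $C_p$ is cyclic of prime order $p$ with generator $a$, and elements of $G$ are written $ta^i$. Let $\xi_p=\exp(2\pi\sqrt{-1}/p)$. For $k\in\mathbb{Z}$ and $l\in\mathbb{Z}/p$, $V_{k,l}$ is the one-dimensional complex $G$-representation on $\mathbb{C}$ with $t\cdot z=t^kz$, $a\cdot z=\xi_p^lz$. $S(V)$ denotes the unit sphere of $V$. *)

(* Defs.v *)
From Stdlib Require Import Reals.
From Coquelicot Require Import Coquelicot.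
Open Scope R_scope.

Notation CC := Complex.C.

Definition xi (p : nat) : CC := (cos (2 * PI / INR p), sin (2 * PI / INR p)).

Definition in_S1 (t : CC) : Prop := Cmod t = 1.

(* The one-dimensional representation V_{k,l}: action of t a^i on z is
   t^k * xi_p^(l*i) * z. Here k >= 0 is all that is needed. *)
Definition actV (p k l : nat) (t : CC) (i : nat) (z : CC) : CC :=
  Cmult (Cmult (pow_n t k) (pow_n (xi p) (l * i))) z.

Definition V3 := (CC * CC * CC)%type.
Definition W3 := (CC * CC)%type.

Definition actV3 (p : nat) (t : CC) (i : nat) (v : V3) : V3 :=
  let '(z1, z2, z3) := v in
  (actV p 1 1 t i z1, actV p p 1 t i z2, actV p (p ^ 2) 1 t i z3).

Definition actW3 (p : nat) (t : CC) (i : nat) (w : W3) : W3 :=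
  let '(w1, w2) := w in (actV p (p ^ 3) 0 t i w1, actV p 0 1 t i w2).

Definition SV3 (v : V3) : Prop :=
  let '(z1, z2, z3) := v in Cmod z1 ^ 2 + Cmod z2 ^ 2 + Cmod z3 ^ 2 = 1.
Definition SW3 (w : W3) : Prop :=
  let '(w1, w2) := w in Cmod w1 ^ 2 + Cmod w2 ^ 2 = 1.

(* Main.v *)
Require Import Defs.
From Stdlib Require Import Reals Arith Lia Lra ZArith Znumtheory.
From Coquelicot Require Import Coquelicot.
Open Scope R_scope.

Lemma pow_n_Cpow (x : CC) (n : nat) : pow_n x n = Cpow x n.
Proof. induction n as [|n IHn]; simpl; [reflexivity|]. now rewrite IHn. Qed.

Definition U (z : CC) : CC := Cmult (RtoC (/ Cmod z)) z.

Lemma Cmod_U_le (z : CC) : Cmod (U z) <= 1.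
Proof.
  unfold U. rewrite Cmod_mult, Cmod_R.
  destruct (Req_dec (Cmod z) 0) as [H|H].
  - rewrite H, Rinv_0, Rabs_R0. lra.
  - rewrite Rabs_pos_eq. field_simplify; [lra|auto].
    apply Rlt_le, Rinv_0_lt_compat. pose proof (Cmod_ge_0 z). lra.
Qed.

Lemma Cmod_U (z : CC) : z <> RtoC 0 -> Cmod (U z) = 1.
Proof.
  intros Hz. unfold U. rewrite Cmod_mult, Cmod_R.
  assert (H : Cmod z <> 0) by (intro H; apply Hz; now apply Cmod_eq_0).
  rewrite Rabs_pos_eq. field. auto.
  apply Rlt_le, Rinv_0_lt_compat. pose proof (Cmod_ge_0 z). lra.
Qed.

Lemma U_scale (c z : CC) : Cmod c = 1 -> U (Cmult c z) = Cmult c (U z).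
Proof.
  intros Hc. unfold U. rewrite Cmod_mult, Hc, Rmult_1_l. ring.
Qed.

Lemma unit_conj (c : CC) : Cmod c = 1 -> Cmult c (Cconj c) = RtoC 1.
Proof.
  intros H. rewrite <- Cmod2_conj, H. rewrite pow1. reflexivity.
Qed.

Lemma Cpow_cis (a : R) (n : nat) : Cpow (cos a, sin a) n = (cos (INR n * a), sin (INR n * a)).
Proof.
  induction n as [|n IHn].
  - simpl. rewrite Rmult_0_l, cos_0, sin_0. reflexivity.
  - rewrite Cpow_S, IHn, S_INR.
    replace ((INR n + 1) * a) with (a + INR n * a) by ring.
    rewrite cos_plus, sin_plus. unfold Cmult. simpl. f_equal; ring.
Qed.

Lemma xi_pow_p (p : nat) : p <> 0%nat -> Cpow (xi p) p = RtoC 1.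
Proof.
  intros Hp. unfold xi. rewrite Cpow_cis.
  assert (HI : INR p <> 0) by (apply not_0_INR; auto).
  replace (INR p * (2 * PI / INR p)) with (2 * PI) by (field; auto).
  rewrite cos_2PI, sin_2PI. reflexivity.
Qed.

Lemma Cmod_xi (p : nat) : Cmod (xi p) = 1.
Proof.
  unfold xi, Cmod. cbv [fst snd].
  pose proof (sin2_cos2 (2 * PI / INR p)) as H. unfold Rsqr in H.
  replace (cos (2 * PI / INR p) ^ 2 + sin (2 * PI / INR p) ^ 2) with 1 by (simpl; lra).
  apply sqrt_1.
Qed.

Lemma Cmod_Cpow_unit (c : CC) (n : nat) : Cmod c = 1 -> Cmod (Cpow c n) = 1.
Proof. intros H. rewrite Cmod_pow, H. apply pow1. Qed.

Definition dd := /50.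
Definition zz := /4.
Definition ka := 7/20.
Definition et := /10.
Definition aO r1 r2 r3 := r2 < r1 + dd /\ r3 < r1 + dd /\ ka < r1.
Definition aA r1 r2 r3 := r1 < r2 + dd /\ r3 < r2 + dd /\ ka < r2.
Definition aB r1 r2 r3 := r1 < r3 + dd /\ r2 < r3 + dd /\ ka < r3.
Definition aZ r1 r2 r3 := zz < r1 /\ zz < r2 /\ zz < r3.
Definition aa r1 r2 r3 := et < r1 /\ et < r2 /\ r3 < r1 + dd /\ r3 < r2 + dd.
Definition ab r1 r2 r3 := et < r1 /\ et < r3 /\ r2 < r1 + dd /\ r2 < r3 + dd.
Definition ac r1 r2 r3 := et < r2 /\ et < r3 /\ r1 < r2 + dd /\ r1 < r3 + dd.
Definition safe r1 r2 r3 :=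
  let O := aO r1 r2 r3 in let A := aA r1 r2 r3 in let B := aB r1 r2 r3 in let Z := aZ r1 r2 r3 in
  let a := aa r1 r2 r3 in let b := ab r1 r2 r3 in let c := ac r1 r2 r3 in
  (O /\ ~A /\ ~B /\ ~Z) \/ (~O /\ A /\ ~B /\ ~Z) \/ (~O /\ ~A /\ B /\ ~Z) \/ (~O /\ ~A /\ ~B /\ Z) \/
  (a /\ ~b /\ ~c) \/ (~a /\ b /\ ~c) \/ (~a /\ ~b /\ c) \/
  (O /\ Z /\ ~A /\ ~B /\ a /\ b /\ ~c) \/ (A /\ Z /\ ~O /\ ~B /\ a /\ c /\ ~b) \/
  (B /\ Z /\ ~O /\ ~A /\ b /\ c /\ ~a).
Lemma th4 x : (~ et < x /\ ~ zz < x /\ ~ ka < x) \/ (et < x /\ ~ zz < x /\ ~ ka < x) \/ (et < x /\ zz < x /\ ~ ka < x) \/ (et < x /\ zz < x /\ ka < x).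
Proof. unfold et, zz, ka. lra. Qed.
Lemma pr3 x y : (y < x + dd /\ x < y + dd) \/ (y < x + dd /\ ~ x < y + dd) \/ (~ y < x + dd /\ x < y + dd).
Proof. unfold dd. lra. Qed.
Lemma safe_all r1 r2 r3 : 0 <= r1 -> 0 <= r2 -> 0 <= r3 -> r1 + r2 + r3 = 1 -> safe r1 r2 r3.
Proof.
  intros H1 H2 H3 Hs.
  unfold safe, aO, aA, aB, aZ, aa, ab, ac.
  assert (Hd : dd = /50) by reflexivity. assert (Hz : zz = /4) by reflexivity.
  assert (Hk : ka = 7/20) by reflexivity. assert (He : et = /10) by reflexivity.
  destruct (th4 r1) as [(T1&T1'&T1'')|[(T1&T1'&T1'')|[(T1&T1'&T1'')|(T1&T1'&T1'')]]];
  destruct (th4 r2) as [(T2&T2'&T2'')|[(T2&T2'&T2'')|[(T2&T2'&T2'')|(T2&T2'&T2'')]]];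
  destruct (th4 r3) as [(T3&T3'&T3'')|[(T3&T3'&T3'')|[(T3&T3'&T3'')|(T3&T3'&T3'')]]];
  destruct (pr3 r1 r2) as [[P1 P1']|[[P1 P1']|[P1 P1']]];
  destruct (pr3 r1 r3) as [[Q1 Q1']|[[Q1 Q1']|[Q1 Q1']]];
  destruct (pr3 r2 r3) as [[R1 R1']|[[R1 R1']|[R1 R1']]];
  first [ exfalso; lra | tauto ].
Qed.

Definition pp (x : R) : R := Rmax x 0.
Definition rr (z : CC) : R := Cmod z ^ 2.
Definition cO r1 r2 r3 := pp (r1 + dd - r2) * pp (r1 + dd - r3) * pp (r1 - ka).
Definition cA r1 r2 r3 := pp (r2 + dd - r1) * pp (r2 + dd - r3) * pp (r2 - ka).
Definition cB r1 r2 r3 := pp (r3 + dd - r1) * pp (r3 + dd - r2) * pp (r3 - ka).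
Definition cZ r1 r2 r3 := pp (r1 - zz) * pp (r2 - zz) * pp (r3 - zz).
Definition ca r1 r2 r3 := pp (r1 - et) * pp (r2 - et) * pp (r1 + dd - r3) * pp (r2 + dd - r3).
Definition cb r1 r2 r3 := pp (r1 - et) * pp (r3 - et) * pp (r1 + dd - r2) * pp (r3 + dd - r2).
Definition cc r1 r2 r3 := pp (r2 - et) * pp (r3 - et) * pp (r2 + dd - r1) * pp (r3 + dd - r1).

Lemma pp_nonneg x : 0 <= pp x.
Proof. unfold pp. apply Rmax_r. Qed.
Lemma pp_pos x : 0 < x -> pp x = x.
Proof. intros. unfold pp. apply Rmax_left. lra. Qed.
Lemma pp_zero x : ~ 0 < x -> pp x = 0.
Proof. intros. unfold pp. apply Rmax_right. lra. Qed.
Lemma pp_pos' x : 0 < x -> 0 < pp x.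
Proof. intros. rewrite pp_pos; auto. Qed.

Lemma pos3 a b c : 0 < a -> 0 < b -> 0 < c -> 0 < pp a * pp b * pp c.
Proof. intros. repeat apply Rmult_lt_0_compat; apply pp_pos'; auto. Qed.
Lemma pos4 a b c e : 0 < a -> 0 < b -> 0 < c -> 0 < e -> 0 < pp a * pp b * pp c * pp e.
Proof. intros. repeat apply Rmult_lt_0_compat; apply pp_pos'; auto. Qed.
Lemma zero3 a b c : ~ (0 < a /\ 0 < b /\ 0 < c) -> pp a * pp b * pp c = 0.
Proof.
  intros H. destruct (Rlt_dec 0 a); [destruct (Rlt_dec 0 b); [destruct (Rlt_dec 0 c)|]|].
  - exfalso; tauto.
  - rewrite (pp_zero c); auto; ring.
  - rewrite (pp_zero b); auto; ring.
  - rewrite (pp_zero a); auto; ring.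
Qed.
Lemma zero4 a b c e : ~ (0 < a /\ 0 < b /\ 0 < c /\ 0 < e) -> pp a * pp b * pp c * pp e = 0.
Proof.
  intros H. destruct (Rlt_dec 0 a); [destruct (Rlt_dec 0 b); [destruct (Rlt_dec 0 c); [destruct (Rlt_dec 0 e)|]|]|].
  - exfalso; tauto.
  - rewrite (pp_zero e); auto; ring.
  - rewrite (pp_zero c); auto; ring.
  - rewrite (pp_zero b); auto; ring.
  - rewrite (pp_zero a); auto; ring.
Qed.

Lemma cO_pos r1 r2 r3 : aO r1 r2 r3 -> 0 < cO r1 r2 r3.
Proof. unfold aO, cO. intros (?&?&?). apply pos3; lra. Qed.
Lemma cO_zero r1 r2 r3 : ~ aO r1 r2 r3 -> cO r1 r2 r3 = 0.
Proof. unfold aO, cO. intros H. apply zero3. intros (?&?&?). apply H; repeat split; lra. Qed.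
Lemma cA_pos r1 r2 r3 : aA r1 r2 r3 -> 0 < cA r1 r2 r3.
Proof. unfold aA, cA. intros (?&?&?). apply pos3; lra. Qed.
Lemma cA_zero r1 r2 r3 : ~ aA r1 r2 r3 -> cA r1 r2 r3 = 0.
Proof. unfold aA, cA. intros H. apply zero3. intros (?&?&?). apply H; repeat split; lra. Qed.
Lemma cB_pos r1 r2 r3 : aB r1 r2 r3 -> 0 < cB r1 r2 r3.
Proof. unfold aB, cB. intros (?&?&?). apply pos3; lra. Qed.
Lemma cB_zero r1 r2 r3 : ~ aB r1 r2 r3 -> cB r1 r2 r3 = 0.
Proof. unfold aB, cB. intros H. apply zero3. intros (?&?&?). apply H; repeat split; lra. Qed.
Lemma cZ_pos r1 r2 r3 : aZ r1 r2 r3 -> 0 < cZ r1 r2 r3.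
Proof. unfold aZ, cZ. intros (?&?&?). apply pos3; lra. Qed.
Lemma cZ_zero r1 r2 r3 : ~ aZ r1 r2 r3 -> cZ r1 r2 r3 = 0.
Proof. unfold aZ, cZ. intros H. apply zero3. intros (?&?&?). apply H; repeat split; lra. Qed.
Lemma ca_pos r1 r2 r3 : aa r1 r2 r3 -> 0 < ca r1 r2 r3.
Proof. unfold aa, ca. intros (?&?&?&?). apply pos4; lra. Qed.
Lemma ca_zero r1 r2 r3 : ~ aa r1 r2 r3 -> ca r1 r2 r3 = 0.
Proof. unfold aa, ca. intros H. apply zero4. intros (?&?&?&?). apply H; repeat split; lra. Qed.
Lemma cb_pos r1 r2 r3 : ab r1 r2 r3 -> 0 < cb r1 r2 r3.
Proof. unfold ab, cb. intros (?&?&?&?). apply pos4; lra. Qed.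
Lemma cb_zero r1 r2 r3 : ~ ab r1 r2 r3 -> cb r1 r2 r3 = 0.
Proof. unfold ab, cb. intros H. apply zero4. intros (?&?&?&?). apply H; repeat split; lra. Qed.
Lemma cc_pos r1 r2 r3 : ac r1 r2 r3 -> 0 < cc r1 r2 r3.
Proof. unfold ac, cc. intros (?&?&?&?). apply pos4; lra. Qed.
Lemma cc_zero r1 r2 r3 : ~ ac r1 r2 r3 -> cc r1 r2 r3 = 0.
Proof. unfold ac, cc. intros H. apply zero4. intros (?&?&?&?). apply H; repeat split; lra. Qed.

Definition mO p (z1 : CC) : CC := Cpow (U z1) (p ^ 3).
Definition mA p (z2 : CC) : CC := Cpow (U z2) (p ^ 2).
Definition mB p (z3 : CC) : CC := Cpow (U z3) p.
Definition mZ p (z1 z2 z3 : CC) : CC :=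
  Cmult (Cmult (Cpow (U z1) (p ^ 2)) (Cpow (Cconj (U z2)) p)) (Cpow (U z3) p).
Definition na p (z1 z2 : CC) : CC := Cmult (U z2) (Cpow (Cconj (U z1)) p).
Definition nb p (z1 z3 : CC) : CC := Cmult (U z3) (Cpow (Cconj (U z1)) (p ^ 2)).
Definition nc p (z2 z3 : CC) : CC := Cmult (U z3) (Cpow (Cconj (U z2)) p).

Definition W1 p (z1 z2 z3 : CC) : CC :=
  let r1 := rr z1 in let r2 := rr z2 in let r3 := rr z3 in
  Cplus (Cplus (Cplus (Cmult (RtoC (cO r1 r2 r3)) (mO p z1))
                      (Cmult (RtoC (cA r1 r2 r3)) (mA p z2)))
               (Cmult (RtoC (cB r1 r2 r3)) (mB p z3)))
        (Cmult Ci (Cmult (RtoC (cZ r1 r2 r3)) (mZ p z1 z2 z3))).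
Definition W2 p (z1 z2 z3 : CC) : CC :=
  let r1 := rr z1 in let r2 := rr z2 in let r3 := rr z3 in
  Cplus (Cplus (Cmult (RtoC (ca r1 r2 r3)) (na p z1 z2))
               (Cmult (RtoC (cb r1 r2 r3)) (nb p z1 z3)))
        (Cmult (RtoC (cc r1 r2 r3)) (nc p z2 z3)).

Lemma npow3 p : (p ^ 3 = p ^ 2 * p)%nat. Proof. simpl. ring. Qed.
Lemma npow2 p : (p ^ 2 = p * p)%nat. Proof. simpl. ring. Qed.

Lemma I1 p u1 u2 u3 :
  Cmult (Cmult (Cmult (Cpow u1 (p ^ 2)) (Cpow (Cconj u2) p)) (Cpow u3 p)) (Cconj (Cpow u1 (p ^ 3)))
  = Cpow (Cmult (Cmult u3 (Cpow (Cconj u1) (p ^ 2))) (Cconj (Cmult u2 (Cpow (Cconj u1) p)))) p.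
Proof.
  rewrite !Cmult_conj, !Cpow_conj, Cconj_conj, !Cpow_mult_l.
  rewrite <- !Cpow_mult_r. rewrite <- npow3, <- npow2. ring.
Qed.

Lemma I2 p u1 u2 u3 :
  Cmult (Cmult (Cmult (Cpow u1 (p ^ 2)) (Cpow (Cconj u2) p)) (Cpow u3 p)) (Cconj (Cpow u2 (p ^ 2)))
  = Cpow (Cmult (Cmult u3 (Cpow (Cconj u2) p)) (Cconj (Cmult u2 (Cpow (Cconj u1) p)))) p.
Proof.
  rewrite !Cmult_conj, !Cpow_conj, Cconj_conj, !Cpow_mult_l.
  rewrite <- !Cpow_mult_r. rewrite <- npow2.
  ring.
Qed.

Lemma I3 p u1 u2 u3 : Cmod u3 = 1 ->
  Cmult (Cmult (Cmult (Cpow u1 (p ^ 2)) (Cpow (Cconj u2) p)) (Cpow u3 p)) (Cconj (Cpow u3 p))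
  = Cpow (Cmult (Cmult u3 (Cpow (Cconj u2) p)) (Cconj (Cmult u3 (Cpow (Cconj u1) (p ^ 2))))) 1.
Proof.
  intros H. pose proof (unit_conj u3 H) as Hu.
  rewrite !Cmult_conj, !Cpow_conj, Cconj_conj, Cpow_1_r.
  assert (E : Cmult (Cpow u3 p) (Cpow (Cconj u3) p) = RtoC 1).
  { rewrite <- Cpow_mult_l, Hu. apply Cpow_1_l. }
  transitivity (Cmult (Cmult (Cpow u1 (p ^ 2)) (Cpow (Cconj u2) p)) (Cmult (Cpow u3 p) (Cpow (Cconj u3) p))).
  { ring. }
  rewrite E.
  transitivity (Cmult (Cmult (Cpow u1 (p ^ 2)) (Cpow (Cconj u2) p)) (Cmult u3 (Cconj u3))).
  { rewrite Hu. reflexivity. }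
  ring.
Qed.

Lemma RtoC_pow' (y : R) (k : nat) : Cpow (RtoC y) k = RtoC (y ^ k).
Proof. rewrite RtoC_pow. reflexivity. Qed.

Lemma match_contra (al be ga de : R) (P Q R' S : CC) (k : nat) :
  0 < al -> 0 < be -> 0 < ga -> 0 < de -> Cmod P = 1 -> Cmod R' = 1 ->
  Cmult Q (Cconj P) = Cpow (Cmult S (Cconj R')) k ->
  Cplus (Cmult (RtoC al) P) (Cmult Ci (Cmult (RtoC be) Q)) = RtoC 0 ->
  Cplus (Cmult (RtoC ga) R') (Cmult (RtoC de) S) = RtoC 0 -> False.
Proof.
  intros Ha Hb Hg Hd HP HR Hid E1 E2.
  pose proof (unit_conj P HP) as HP'. pose proof (unit_conj R' HR) as HR'.
  assert (E1'' : Cplus (Cmult (RtoC al) (Cmult P (Cconj P))) (Cmult (Cmult Ci (RtoC be)) (Cmult Q (Cconj P))) = RtoC 0).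
  { transitivity (Cmult (Cplus (Cmult (RtoC al) P) (Cmult Ci (Cmult (RtoC be) Q))) (Cconj P)).
    - ring.
    - rewrite E1. ring. }
  assert (E2'' : Cplus (Cmult (RtoC ga) (Cmult R' (Cconj R'))) (Cmult (RtoC de) (Cmult S (Cconj R'))) = RtoC 0).
  { transitivity (Cmult (Cplus (Cmult (RtoC ga) R') (Cmult (RtoC de) S)) (Cconj R')).
    - ring.
    - rewrite E2. ring. }
  rewrite HP' in E1''. rewrite HR' in E2''.
  rewrite Hid in E1''.
  destruct (Cmult S (Cconj R')) as [y1 y2] eqn:EY.
  assert (Hy2 : y2 = 0).
  { apply (f_equal snd) in E2''. unfold Cplus, Cmult, RtoC in E2''. simpl in E2''.
    apply (Rmult_eq_reg_l de); [|lra]. lra. }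
  subst y2.
  change (y1, 0) with (RtoC y1) in E1''. rewrite RtoC_pow' in E1''.
  apply (f_equal fst) in E1''. unfold Cplus, Cmult, RtoC, Ci in E1''. simpl in E1''.
  lra.
Qed.

Lemma rr_nonneg z : 0 <= rr z.
Proof. unfold rr. apply pow2_ge_0. Qed.

Lemma nz_of_rr z : 0 < rr z -> z <> RtoC 0.
Proof. unfold rr. intros H Hz. rewrite Hz, Cmod_0 in H. simpl in H. lra. Qed.

Lemma unitU z : 0 < rr z -> Cmod (U z) = 1.
Proof. intros H. apply Cmod_U, nz_of_rr, H. Qed.
Lemma unitUc z : 0 < rr z -> Cmod (Cconj (U z)) = 1.
Proof. intros H. rewrite Cmod_conj. apply unitU, H. Qed.

Lemma single_nz (c : R) (m : CC) : 0 < c -> Cmod m = 1 -> Cmult (RtoC c) m <> RtoC 0.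
Proof.
  intros Hc Hm E. apply (f_equal Cmod) in E. rewrite Cmod_mult, Cmod_R, Hm, Cmod_0 in E.
  rewrite Rabs_pos_eq in E; lra.
Qed.

Lemma single_nz_i (c : R) (m : CC) : 0 < c -> Cmod m = 1 -> Cmult Ci (Cmult (RtoC c) m) <> RtoC 0.
Proof.
  intros Hc Hm E. apply (f_equal Cmod) in E. rewrite !Cmod_mult, Cmod_R, Hm, Cmod_0 in E.
  unfold Ci, Cmod in E. simpl in E. rewrite Rabs_pos_eq in E; [|lra].
  replace ((0 * (0 * 1) + 1 * (1 * 1))) with 1 in E by ring. rewrite sqrt_1 in E. lra.
Qed.

Lemma Cmod_mult_1 a b : Cmod a = 1 -> Cmod b = 1 -> Cmod (Cmult a b) = 1.
Proof. intros. rewrite Cmod_mult. rewrite H, H0. ring. Qed.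

Ltac unit_tac :=
  repeat match goal with
  | |- Cmod (Cmult _ _) = 1 => apply Cmod_mult_1
  | |- Cmod (Cpow _ _) = 1 => apply Cmod_Cpow_unit
  | |- Cmod (Cconj (U _)) = 1 => apply unitUc
  | |- Cmod (U _) = 1 => apply unitU
  end; lra.

Lemma aO_r r1 r2 r3 : aO r1 r2 r3 -> 0 < r1.
Proof. unfold aO, ka. lra. Qed.
Lemma aA_r r1 r2 r3 : aA r1 r2 r3 -> 0 < r2.
Proof. unfold aA, ka. lra. Qed.
Lemma aB_r r1 r2 r3 : aB r1 r2 r3 -> 0 < r3.
Proof. unfold aB, ka. lra. Qed.
Lemma aZ_r r1 r2 r3 : aZ r1 r2 r3 -> 0 < r1 /\ 0 < r2 /\ 0 < r3.
Proof. unfold aZ, zz. lra. Qed.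
Lemma aa_r r1 r2 r3 : aa r1 r2 r3 -> 0 < r1 /\ 0 < r2.
Proof. unfold aa, et. lra. Qed.
Lemma ab_r r1 r2 r3 : ab r1 r2 r3 -> 0 < r1 /\ 0 < r3.
Proof. unfold ab, et. lra. Qed.
Lemma ac_r r1 r2 r3 : ac r1 r2 r3 -> 0 < r2 /\ 0 < r3.
Proof. unfold ac, et. lra. Qed.

Lemma W_nonzero p z1 z2 z3 : rr z1 + rr z2 + rr z3 = 1 ->
  ~ (W1 p z1 z2 z3 = RtoC 0 /\ W2 p z1 z2 z3 = RtoC 0).
Proof.
  intros Hs [E1 E2].
  pose proof (rr_nonneg z1). pose proof (rr_nonneg z2). pose proof (rr_nonneg z3).
  destruct (safe_all (rr z1) (rr z2) (rr z3)) as
    [(O&A&B&Z)|[(O&A&B&Z)|[(O&A&B&Z)|[(O&A&B&Z)|[(a&b&c)|[(a&b&c)|[(a&b&c)|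
     [(O&Z&A&B&a&b&c)|[(A&Z&O&B&a&c&b)|(B&Z&O&A&b&c&a)]]]]]]]]]; auto;
  unfold W1, W2 in E1, E2;
  repeat match goal with
  | H : ~ aO _ _ _ |- _ => rewrite (cO_zero _ _ _ H) in E1; clear H
  | H : ~ aA _ _ _ |- _ => rewrite (cA_zero _ _ _ H) in E1; clear H
  | H : ~ aB _ _ _ |- _ => rewrite (cB_zero _ _ _ H) in E1; clear H
  | H : ~ aZ _ _ _ |- _ => rewrite (cZ_zero _ _ _ H) in E1; clear H
  | H : ~ aa _ _ _ |- _ => rewrite (ca_zero _ _ _ H) in E2; clear H
  | H : ~ ab _ _ _ |- _ => rewrite (cb_zero _ _ _ H) in E2; clear H
  | H : ~ ac _ _ _ |- _ => rewrite (cc_zero _ _ _ H) in E2; clear H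
  end;
  repeat match goal with
  | H : aO _ _ _ |- _ => pose proof (aO_r _ _ _ H); pose proof (cO_pos _ _ _ H); clear H
  | H : aA _ _ _ |- _ => pose proof (aA_r _ _ _ H); pose proof (cA_pos _ _ _ H); clear H
  | H : aB _ _ _ |- _ => pose proof (aB_r _ _ _ H); pose proof (cB_pos _ _ _ H); clear H
  | H : aZ _ _ _ |- _ => pose proof (aZ_r _ _ _ H); pose proof (cZ_pos _ _ _ H); clear H
  | H : aa _ _ _ |- _ => pose proof (aa_r _ _ _ H); pose proof (ca_pos _ _ _ H); clear H
  | H : ab _ _ _ |- _ => pose proof (ab_r _ _ _ H); pose proof (cb_pos _ _ _ H); clear H
  | H : ac _ _ _ |- _ => pose proof (ac_r _ _ _ H); pose proof (cc_pos _ _ _ H); clear H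
  end.
  - apply (single_nz (cO (rr z1) (rr z2) (rr z3)) (mO p z1)); [auto| unfold mO; unit_tac | rewrite <- E1; ring].
  - apply (single_nz (cA (rr z1) (rr z2) (rr z3)) (mA p z2)); [auto| unfold mA; unit_tac | rewrite <- E1; ring].
  - apply (single_nz (cB (rr z1) (rr z2) (rr z3)) (mB p z3)); [auto| unfold mB; unit_tac | rewrite <- E1; ring].
  - apply (single_nz_i (cZ (rr z1) (rr z2) (rr z3)) (mZ p z1 z2 z3)); [auto| unfold mZ; unit_tac | rewrite <- E1; ring].
  - apply (single_nz (ca (rr z1) (rr z2) (rr z3)) (na p z1 z2)); [auto| unfold na; unit_tac | rewrite <- E2; ring].
  - apply (single_nz (cb (rr z1) (rr z2) (rr z3)) (nb p z1 z3)); [auto| unfold nb; unit_tac | rewrite <- E2; ring].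
  - apply (single_nz (cc (rr z1) (rr z2) (rr z3)) (nc p z2 z3)); [auto| unfold nc; unit_tac | rewrite <- E2; ring].
  - apply (match_contra (cO (rr z1) (rr z2) (rr z3)) (cZ (rr z1) (rr z2) (rr z3)) (ca (rr z1) (rr z2) (rr z3)) (cb (rr z1) (rr z2) (rr z3)) (mO p z1) (mZ p z1 z2 z3) (na p z1 z2) (nb p z1 z3) p);
      [auto|auto|auto|auto| unfold mO; unit_tac | unfold na; unit_tac
      | unfold mZ, mO, na, nb; apply I1 | rewrite <- E1; ring | rewrite <- E2; ring].
  - apply (match_contra (cA (rr z1) (rr z2) (rr z3)) (cZ (rr z1) (rr z2) (rr z3)) (ca (rr z1) (rr z2) (rr z3)) (cc (rr z1) (rr z2) (rr z3)) (mA p z2) (mZ p z1 z2 z3) (na p z1 z2) (nc p z2 z3) p);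
      [auto|auto|auto|auto| unfold mA; unit_tac | unfold na; unit_tac
      | unfold mZ, mA, na, nc; apply I2 | rewrite <- E1; ring | rewrite <- E2; ring].
  - apply (match_contra (cB (rr z1) (rr z2) (rr z3)) (cZ (rr z1) (rr z2) (rr z3)) (cb (rr z1) (rr z2) (rr z3)) (cc (rr z1) (rr z2) (rr z3)) (mB p z3) (mZ p z1 z2 z3) (nb p z1 z3) (nc p z2 z3) 1);
      [auto|auto|auto|auto| unfold mB; unit_tac | unfold nb; unit_tac
      | unfold mZ, mB, nb, nc; apply I3; unit_tac | rewrite <- E1; ring | rewrite <- E2; ring].
Qed.

Section Ch.
Variables (p : nat) (T X : CC).
Hypothesis HT : Cmult T (Cconj T) = RtoC 1.
Hypothesis HX : Cmult X (Cconj X) = RtoC 1.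
Hypothesis HXp : Cpow X p = RtoC 1.

Lemma Xp2 : Cpow X (p ^ 2) = RtoC 1.
Proof. rewrite npow2, Cpow_mult_r, HXp. apply Cpow_1_l. Qed.
Lemma Xp3 : Cpow X (p ^ 3) = RtoC 1.
Proof. rewrite npow3, Cpow_mult_r, Xp2. apply Cpow_1_l. Qed.
Lemma Xcp : Cpow (Cconj X) p = RtoC 1.
Proof. rewrite <- Cpow_conj, HXp. unfold Cconj, RtoC. simpl. f_equal. ring. Qed.
Lemma Xcp2 : Cpow (Cconj X) (p ^ 2) = RtoC 1.
Proof. rewrite npow2, Cpow_mult_r, Xcp. apply Cpow_1_l. Qed.
Lemma TTc n : Cmult (Cpow T n) (Cpow (Cconj T) n) = RtoC 1.
Proof. rewrite <- Cpow_mult_l, HT. apply Cpow_1_l. Qed.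

Lemma ch1 : Cpow (Cmult T X) (p ^ 3) = Cpow T (p ^ 3).
Proof. rewrite Cpow_mult_l, Xp3. ring. Qed.
Lemma ch2 : Cpow (Cmult (Cpow T p) X) (p ^ 2) = Cpow T (p ^ 3).
Proof.
  rewrite Cpow_mult_l, Xp2, <- Cpow_mult_r.
  replace (p * p ^ 2)%nat with (p ^ 3)%nat by (simpl; ring). ring.
Qed.
Lemma ch3 : Cpow (Cmult (Cpow T (p ^ 2)) X) p = Cpow T (p ^ 3).
Proof.
  rewrite Cpow_mult_l, HXp, <- Cpow_mult_r, <- npow3. ring.
Qed.
Lemma chZ : Cmult (Cmult (Cpow (Cmult T X) (p ^ 2)) (Cpow (Cconj (Cmult (Cpow T p) X)) p))
                  (Cpow (Cmult (Cpow T (p ^ 2)) X) p) = Cpow T (p ^ 3).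
Proof.
  rewrite Cmult_conj, Cpow_conj, !Cpow_mult_l, Xp2, HXp, Xcp, <- !Cpow_mult_r.
  rewrite <- npow2, <- npow3.
  transitivity (Cmult (Cmult (Cpow T (p ^ 2)) (Cpow (Cconj T) (p ^ 2))) (Cpow T (p ^ 3))).
  - ring.
  - rewrite TTc. ring.
Qed.
Lemma cha : Cmult (Cmult (Cpow T p) X) (Cpow (Cconj (Cmult T X)) p) = X.
Proof.
  rewrite Cmult_conj, Cpow_mult_l, Xcp.
  transitivity (Cmult (Cmult (Cpow T p) (Cpow (Cconj T) p)) X); [ring|]. rewrite TTc. ring.
Qed.
Lemma chb : Cmult (Cmult (Cpow T (p ^ 2)) X) (Cpow (Cconj (Cmult T X)) (p ^ 2)) = X.
Proof.
  rewrite Cmult_conj, Cpow_mult_l, Xcp2.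
  transitivity (Cmult (Cmult (Cpow T (p ^ 2)) (Cpow (Cconj T) (p ^ 2))) X); [ring|]. rewrite TTc. ring.
Qed.
Lemma chc : Cmult (Cmult (Cpow T (p ^ 2)) X) (Cpow (Cconj (Cmult (Cpow T p) X)) p) = X.
Proof.
  rewrite Cmult_conj, Cpow_mult_l, Xcp, <- Cpow_conj, <- Cpow_mult_r, <- npow2, Cpow_conj.
  transitivity (Cmult (Cmult (Cpow T (p ^ 2)) (Cpow (Cconj T) (p ^ 2))) X); [ring|]. rewrite TTc. ring.
Qed.
End Ch.

Lemma rr_scale c z : Cmod c = 1 -> rr (Cmult c z) = rr z.
Proof. intros H. unfold rr. rewrite Cmod_mult, H, Rmult_1_l. reflexivity. Qed.

Section Act.
Variables (p : nat) (t X z1 z2 z3 : CC).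
Hypothesis Ht : Cmod t = 1.
Hypothesis HXm : Cmod X = 1.
Hypothesis HXp : Cpow X p = RtoC 1.

Lemma c1u : Cmod (Cmult t X) = 1. Proof. apply Cmod_mult_1; auto. Qed.
Lemma c2u : Cmod (Cmult (Cpow t p) X) = 1. Proof. apply Cmod_mult_1; auto. apply Cmod_Cpow_unit; auto. Qed.
Lemma c3u : Cmod (Cmult (Cpow t (p ^ 2)) X) = 1. Proof. apply Cmod_mult_1; auto. apply Cmod_Cpow_unit; auto. Qed.

Let HT := unit_conj t Ht.
Let HX := unit_conj X HXm.

Lemma mO_act : mO p (Cmult (Cmult t X) z1) = Cmult (Cpow t (p ^ 3)) (mO p z1).
Proof. unfold mO. rewrite (U_scale (Cmult t X) z1) by apply c1u. rewrite Cpow_mult_l, (ch1 p t X) by auto. reflexivity. Qed.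
Lemma mA_act : mA p (Cmult (Cmult (Cpow t p) X) z2) = Cmult (Cpow t (p ^ 3)) (mA p z2).
Proof. unfold mA. rewrite (U_scale (Cmult (Cpow t p) X) z2) by apply c2u. rewrite Cpow_mult_l, (ch2 p t X) by auto. reflexivity. Qed.
Lemma mB_act : mB p (Cmult (Cmult (Cpow t (p ^ 2)) X) z3) = Cmult (Cpow t (p ^ 3)) (mB p z3).
Proof. unfold mB. rewrite (U_scale (Cmult (Cpow t (p ^ 2)) X) z3) by apply c3u. rewrite Cpow_mult_l, (ch3 p t X) by auto. reflexivity. Qed.
Lemma mZ_act : mZ p (Cmult (Cmult t X) z1) (Cmult (Cmult (Cpow t p) X) z2) (Cmult (Cmult (Cpow t (p ^ 2)) X) z3)
  = Cmult (Cpow t (p ^ 3)) (mZ p z1 z2 z3).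
Proof.
  unfold mZ. rewrite (U_scale (Cmult t X) z1) by apply c1u. rewrite (U_scale (Cmult (Cpow t p) X) z2) by apply c2u. rewrite (U_scale (Cmult (Cpow t (p ^ 2)) X) z3) by apply c3u.
  rewrite (Cmult_conj (Cmult (Cpow t p) X) (U z2)).
  rewrite (Cpow_mult_l (Cmult t X) (U z1)), (Cpow_mult_l (Cconj (Cmult (Cpow t p) X)) (Cconj (U z2))),
    (Cpow_mult_l (Cmult (Cpow t (p ^ 2)) X) (U z3)).
  rewrite <- (chZ p t X) by auto. ring.
Qed.
Lemma na_act : na p (Cmult (Cmult t X) z1) (Cmult (Cmult (Cpow t p) X) z2) = Cmult X (na p z1 z2).
Proof.
  unfold na. rewrite (U_scale (Cmult t X) z1) by apply c1u. rewrite (U_scale (Cmult (Cpow t p) X) z2) by apply c2u.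
  rewrite Cmult_conj, Cpow_mult_l. rewrite <- (cha p t X) at 3 by auto.
  rewrite Cmult_conj, Cpow_mult_l. ring.
Qed.
Lemma nb_act : nb p (Cmult (Cmult t X) z1) (Cmult (Cmult (Cpow t (p ^ 2)) X) z3) = Cmult X (nb p z1 z3).
Proof.
  unfold nb. rewrite (U_scale (Cmult t X) z1) by apply c1u. rewrite (U_scale (Cmult (Cpow t (p ^ 2)) X) z3) by apply c3u.
  rewrite Cmult_conj, Cpow_mult_l. rewrite <- (chb p t X) at 3 by auto.
  rewrite Cmult_conj, Cpow_mult_l. ring.
Qed.
Lemma nc_act : nc p (Cmult (Cmult (Cpow t p) X) z2) (Cmult (Cmult (Cpow t (p ^ 2)) X) z3) = Cmult X (nc p z2 z3).
Proof.
  unfold nc. rewrite (U_scale (Cmult (Cpow t p) X) z2) by apply c2u. rewrite (U_scale (Cmult (Cpow t (p ^ 2)) X) z3) by apply c3u.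
  rewrite Cmult_conj, Cpow_mult_l. rewrite <- (chc p t X) at 3 by auto.
  rewrite Cmult_conj, Cpow_mult_l. ring.
Qed.

Lemma W1_act : W1 p (Cmult (Cmult t X) z1) (Cmult (Cmult (Cpow t p) X) z2) (Cmult (Cmult (Cpow t (p ^ 2)) X) z3)
  = Cmult (Cpow t (p ^ 3)) (W1 p z1 z2 z3).
Proof.
  unfold W1. rewrite !rr_scale by (first [apply c1u|apply c2u|apply c3u]).
  rewrite mO_act, mA_act, mB_act, mZ_act. ring.
Qed.
Lemma W2_act : W2 p (Cmult (Cmult t X) z1) (Cmult (Cmult (Cpow t p) X) z2) (Cmult (Cmult (Cpow t (p ^ 2)) X) z3)
  = Cmult X (W2 p z1 z2 z3).
Proof.
  unfold W2. rewrite !rr_scale by (first [apply c1u|apply c2u|apply c3u]).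
  rewrite na_act, nb_act, nc_act. ring.
Qed.
End Act.

Definition Nn p z1 z2 z3 := sqrt (Cmod (W1 p z1 z2 z3) ^ 2 + Cmod (W2 p z1 z2 z3) ^ 2).
Definition fmap p (v : V3) : W3 :=
  let z1 := fst (fst v) in let z2 := snd (fst v) in let z3 := snd v in
  (Cmult (W1 p z1 z2 z3) (RtoC (/ Nn p z1 z2 z3)), Cmult (W2 p z1 z2 z3) (RtoC (/ Nn p z1 z2 z3))).

Lemma X_props p i : p <> 0%nat -> Cmod (Cpow (xi p) (1 * i)) = 1 /\ Cpow (Cpow (xi p) (1 * i)) p = RtoC 1.
Proof.
  intros Hp. split.
  - apply Cmod_Cpow_unit, Cmod_xi.
  - rewrite <- Cpow_mult_r, Nat.mul_comm, Cpow_mult_r, xi_pow_p by auto. apply Cpow_1_l.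
Qed.

Lemma fmap_equiv p t i v : p <> 0%nat -> Cmod t = 1 -> fmap p (actV3 p t i v) = actW3 p t i (fmap p v).
Proof.
  intros Hp Ht. destruct v as [[z1 z2] z3].
  destruct (X_props p i Hp) as [HXm HXp].
  unfold actV3, actW3, fmap. cbv beta iota zeta delta [fst snd]. unfold actV.
  rewrite (pow_n_Cpow t 1), (pow_n_Cpow t p), (pow_n_Cpow t (p^2)), (pow_n_Cpow t (p^3)), (pow_n_Cpow t 0), (pow_n_Cpow (xi p) (1*i)), (pow_n_Cpow (xi p) (0*i)).
  set (X := Cpow (xi p) (1 * i)) in *.
  rewrite Cpow_1_r.
  rewrite W1_act, W2_act by auto.
  assert (EN : Nn p (Cmult (Cmult t X) z1) (Cmult (Cmult (Cpow t p) X) z2) (Cmult (Cmult (Cpow t (p ^ 2)) X) z3)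
               = Nn p z1 z2 z3).
  { unfold Nn. rewrite W1_act, W2_act by auto. rewrite !Cmod_mult, HXm, Cmod_Cpow_unit by auto.
    rewrite !Rmult_1_l. reflexivity. }
  rewrite EN. rewrite Nat.mul_0_l. simpl (Cpow _ 0). f_equal; ring.
Qed.

Lemma fmap_sphere p v : SV3 v -> SW3 (fmap p v).
Proof.
  destruct v as [[z1 z2] z3]. unfold SV3, SW3, fmap. cbv [fst snd]. intros Hs.
  assert (Hnz := W_nonzero p z1 z2 z3 Hs).
  set (a := Cmod (W1 p z1 z2 z3)). set (b := Cmod (W2 p z1 z2 z3)).
  assert (Hpos : 0 < a ^ 2 + b ^ 2).
  { destruct (Req_dec a 0) as [Ha|Ha].
    - assert (b <> 0).
      { intro Hb. apply Hnz. split; apply Cmod_eq_0; auto. }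
      pose proof (pow2_ge_0 a). assert (0 < b ^ 2) by (apply pow2_gt_0; auto). lra.
    - pose proof (pow2_ge_0 b). assert (0 < a ^ 2) by (apply pow2_gt_0; auto). lra. }
  unfold Nn. fold a b.
  rewrite !Cmod_mult, !Cmod_R. rewrite Rabs_pos_eq.
  2:{ apply Rlt_le, Rinv_0_lt_compat, sqrt_lt_R0; auto. }
  fold a b. set (s := sqrt (a ^ 2 + b ^ 2)).
  assert (Hs0 : 0 < s) by (apply sqrt_lt_R0; auto).
  assert (Hs2 : s ^ 2 = a ^ 2 + b ^ 2) by (unfold s; rewrite <- Rsqr_pow2; apply Rsqr_sqrt; lra).
  replace ((a * / s) ^ 2 + (b * / s) ^ 2) with ((a ^ 2 + b ^ 2) / s ^ 2) by (field; lra).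
  rewrite Hs2. field. lra.
Qed.

Lemma cont_pair {T U1 U2 : UniformSpace} (f : T -> U1) (g : T -> U2) x :
  continuous f x -> continuous g x -> continuous (fun y => (f y, g y) : prod_UniformSpace U1 U2) x.
Proof.
  intros Hf Hg. unfold continuous. apply filterlim_locally. intros eps.
  pose proof (proj1 (filterlim_locally _ _) Hf eps) as A.
  pose proof (proj1 (filterlim_locally _ _) Hg eps) as B.
  generalize (filter_and _ _ A B). apply filter_imp. intros y [H1 H2]. split; auto.
Qed.

Section C.
Context {T : UniformSpace}.

Lemma cC_pair (f g : T -> R) x : continuous f x -> continuous g x -> continuous (fun y => (f y, g y) : CC) x.
Proof. intros. apply (cont_pair f g x); auto. Qed.

Lemma cC_RtoC (f : T -> R) x : continuous f x -> continuous (fun y => RtoC (f y)) x.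
Proof. intros. apply cC_pair; auto. apply continuous_const. Qed.

Lemma cR_mult (f g : T -> R) x : continuous f x -> continuous g x -> continuous (fun y => f y * g y) x.
Proof. intros. apply (continuous_mult (K := R_AbsRing) f g x); auto. Qed.
Lemma cR_plus (f g : T -> R) x : continuous f x -> continuous g x -> continuous (fun y => f y + g y) x.
Proof. intros. apply (continuous_plus (V := R_NormedModule) f g x); auto. Qed.
Lemma cR_minus (f g : T -> R) x : continuous f x -> continuous g x -> continuous (fun y => f y - g y) x.
Proof. intros. apply (continuous_minus (V := R_NormedModule) f g x); auto. Qed.
Lemma cR_const (c : R) x : continuous (fun _ : T => c) x.
Proof. apply continuous_const. Qed.

Lemma cC_fst (f : T -> CC) x : continuous f x -> continuous (fun y => fst (f y)) x.
Proof.
  intros H. apply continuous_comp with (g := fst); auto.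
  destruct (f x). apply continuous_fst.
Qed.
Lemma cC_snd (f : T -> CC) x : continuous f x -> continuous (fun y => snd (f y)) x.
Proof.
  intros H. apply continuous_comp with (g := snd); auto.
  destruct (f x). apply continuous_snd.
Qed.

Lemma cC_mult (f g : T -> CC) x : continuous f x -> continuous g x -> continuous (fun y => Cmult (f y) (g y)) x.
Proof.
  intros Hf Hg. unfold Cmult. apply cC_pair.
  - apply cR_minus; apply cR_mult; first [apply cC_fst | apply cC_snd]; auto.
  - apply cR_plus; apply cR_mult; first [apply cC_fst | apply cC_snd]; auto.
Qed.

Lemma cC_plus (f g : T -> CC) x : continuous f x -> continuous g x -> continuous (fun y => Cplus (f y) (g y)) x.
Proof.
  intros Hf Hg. unfold Cplus. apply cC_pair.
  - apply cR_plus; apply cC_fst; auto.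
  - apply cR_plus; apply cC_snd; auto.
Qed.

Lemma cC_const (c : CC) x : continuous (fun _ : T => c) x.
Proof. apply continuous_const. Qed.

Lemma cC_pow (f : T -> CC) x n : continuous f x -> continuous (fun y => Cpow (f y) n) x.
Proof.
  intros H. induction n as [|n IH].
  - simpl. apply cC_const.
  - simpl. apply cC_mult; auto.
Qed.

Lemma cC_conj (f : T -> CC) x : continuous f x -> continuous (fun y => Cconj (f y)) x.
Proof.
  intros H. unfold Cconj. apply cC_pair.
  - apply cC_fst; auto.
  - apply (continuous_opp (V := R_NormedModule)). apply cC_snd; auto.
Qed.

Lemma cC_Cmod (f : T -> CC) x : continuous f x -> continuous (fun y => Cmod (f y)) x.
Proof.
  intros H. unfold Cmod. apply continuous_comp with (g := sqrt); [|apply continuous_sqrt].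
  simpl. apply cR_plus; apply cR_mult; try apply cR_mult; try apply cR_const; first [apply cC_fst | apply cC_snd]; auto.
Qed.

Lemma cC_U (f : T -> CC) x : continuous f x -> f x <> RtoC 0 -> continuous (fun y => U (f y)) x.
Proof.
  intros H Hz. unfold U. apply cC_mult; auto. apply cC_RtoC.
  apply continuous_comp with (g := fun r => / r).
  - apply cC_Cmod; auto.
  - apply continuous_Rinv. intro E. apply Hz. apply Cmod_eq_0. auto.
Qed.

Lemma cR_pp (f : T -> R) x : continuous f x -> continuous (fun y => pp (f y)) x.
Proof.
  intros H.
  apply continuous_ext with (f := fun y => (f y + Rabs (f y)) * / 2).
  - intros y. change ((f y + Rabs (f y)) * / 2 = pp (f y)). unfold pp. destruct (Rle_dec (f y) 0).
    + rewrite Rmax_right by auto. rewrite Rabs_left1 by auto. field.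
    + rewrite Rmax_left by lra. rewrite Rabs_pos_eq by lra. field.
  - apply cR_mult; [|apply cR_const]. apply cR_plus; auto.
    apply continuous_comp with (g := Rabs); auto. apply continuous_Rabs.
Qed.

Lemma cR_rr (f : T -> CC) x : continuous f x -> continuous (fun y => rr (f y)) x.
Proof.
  intros H. unfold rr. simpl. apply cR_mult; [apply cC_Cmod; auto|]. apply cR_mult; [apply cC_Cmod; auto|apply cR_const].
Qed.

Lemma term_cont (c : T -> R) (m : T -> CC) v :
  continuous c v -> 0 <= c v -> (0 < c v -> continuous m v) -> (forall y, Cmod (m y) <= 1) ->
  continuous (fun y => Cmult (RtoC (c y)) (m y)) v.
Proof.
  intros Hc Hc0 Hm Hb. destruct Hc0 as [Hp|He].
  - apply cC_mult; [apply cC_RtoC|]; auto.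
  - unfold continuous. apply filterlim_locally. intros eps.
    pose proof (proj1 (filterlim_locally _ _) Hc eps) as A.
    revert A. apply filter_imp. intros y Hy.
    rewrite <- He in *. 
    assert (Hy' : Rabs (c y) < eps).
    { change (Rabs (c y - 0) < eps) in Hy. rewrite Rminus_0_r in Hy. auto. }
    pose proof (Rmax_Cmod (m y)) as HM. pose proof (Hb y) as HB.
    assert (Hx1 : Rabs (fst (m y)) <= 1) by (eapply Rle_trans; [apply Rmax_l|]; eapply Rle_trans; eauto).
    assert (Hx2 : Rabs (snd (m y)) <= 1) by (eapply Rle_trans; [apply Rmax_r|]; eapply Rle_trans; eauto).
    destruct (m y) as [x1 x2]. destruct (m v) as [u1 u2]. simpl in Hx1, Hx2.
    split; change (Rabs (fst (Cmult (RtoC (c y)) (x1, x2)) - fst (Cmult (RtoC 0) (u1, u2))) < eps)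
             || change (Rabs (snd (Cmult (RtoC (c y)) (x1, x2)) - snd (Cmult (RtoC 0) (u1, u2))) < eps);
      simpl; replace (c y * x1 - 0 * x2 - (0 * u1 - 0 * u2)) with (c y * x1) by ring;
      try replace (c y * x2 + 0 * x1 - (0 * u2 + 0 * u1)) with (c y * x2) by ring;
      rewrite Rabs_mult; 
      [ apply Rle_lt_trans with (Rabs (c y) * 1); [apply Rmult_le_compat_l; auto; apply Rabs_pos| lra]
      | apply Rle_lt_trans with (Rabs (c y) * 1); [apply Rmult_le_compat_l; auto; apply Rabs_pos| lra]].
Qed.
End C.

Lemma pp_pos_inv a : 0 < pp a -> 0 < a.
Proof. intros H. destruct (Rlt_dec 0 a); auto. rewrite pp_zero in H; auto. lra. Qed.
Lemma pos3_inv a b c : 0 < pp a * pp b * pp c -> 0 < a /\ 0 < b /\ 0 < c.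
Proof.
  intros H. pose proof (pp_nonneg a). pose proof (pp_nonneg b). pose proof (pp_nonneg c).
  repeat split; apply pp_pos_inv; 
  match goal with |- 0 < pp ?x => destruct (Rle_lt_or_eq_dec 0 (pp x) (pp_nonneg x)) as [?|E]; auto; rewrite <- E in H; lra end.
Qed.
Lemma pos4_inv a b c e : 0 < pp a * pp b * pp c * pp e -> 0 < a /\ 0 < b /\ 0 < c /\ 0 < e.
Proof.
  intros H. pose proof (pp_nonneg a). pose proof (pp_nonneg b). pose proof (pp_nonneg c). pose proof (pp_nonneg e).
  repeat split; apply pp_pos_inv; 
  match goal with |- 0 < pp ?x => destruct (Rle_lt_or_eq_dec 0 (pp x) (pp_nonneg x)) as [?|E]; auto; rewrite <- E in H; lra end.
Qed.

Lemma Cmod_le1_mult a b : Cmod a <= 1 -> Cmod b <= 1 -> Cmod (Cmult a b) <= 1.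
Proof. intros. rewrite Cmod_mult. pose proof (Cmod_ge_0 a). pose proof (Cmod_ge_0 b). nra. Qed.
Lemma pow_le1' x n : 0 <= x -> x <= 1 -> x ^ n <= 1.
Proof.
  intros H0 H1. induction n as [|n IH]; simpl; [lra|].
  assert (0 <= x ^ n) by (apply pow_le; auto). nra.
Qed.
Lemma Cmod_le1_pow a n : Cmod a <= 1 -> Cmod (Cpow a n) <= 1.
Proof. intros. rewrite Cmod_pow. apply pow_le1'; auto. apply Cmod_ge_0. Qed.
Lemma Cmod_le1_conj a : Cmod a <= 1 -> Cmod (Cconj a) <= 1.
Proof. intros. rewrite Cmod_conj. auto. Qed.

Ltac le1_tac :=
  repeat match goal with
  | |- Cmod (Cmult _ _) <= 1 => apply Cmod_le1_mult
  | |- Cmod (Cpow _ _) <= 1 => apply Cmod_le1_pow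
  | |- Cmod (Cconj _) <= 1 => apply Cmod_le1_conj
  | |- Cmod (U _) <= 1 => apply Cmod_U_le
  end.

Lemma nz_of_rr' z : 0 < rr z -> z <> RtoC 0.
Proof. apply nz_of_rr. Qed.

Section MC.
Variable p : nat.
Variable v : V3.
Let z1f (y : V3) := fst (fst y).
Let z2f (y : V3) := snd (fst y).
Let z3f (y : V3) := snd y.

Lemma cz1 : continuous z1f v.
Proof. unfold z1f. destruct v as [[a b] c]. apply continuous_comp with (g := fst); apply continuous_fst. Qed.
Lemma cz2 : continuous z2f v.
Proof. unfold z2f. destruct v as [[a b] c]. apply continuous_comp with (g := snd). apply continuous_fst. apply continuous_snd. Qed.
Lemma cz3 : continuous z3f v.
Proof. unfold z3f. destruct v as [[a b] c]. apply continuous_snd. Qed.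

Lemma cr1 : continuous (fun y => rr (z1f y)) v. Proof. apply cR_rr, cz1. Qed.
Lemma cr2 : continuous (fun y => rr (z2f y)) v. Proof. apply cR_rr, cz2. Qed.
Lemma cr3 : continuous (fun y => rr (z3f y)) v. Proof. apply cR_rr, cz3. Qed.

Ltac coef_cont :=
  repeat match goal with
  | |- continuous (fun y => _ * _) _ => apply cR_mult
  | |- continuous (fun y => pp _) _ => apply cR_pp
  | |- continuous (fun y => _ + _) _ => apply cR_plus
  | |- continuous (fun y => _ - _) _ => apply cR_minus
  end;
  first [ apply cr1 | apply cr2 | apply cr3 | apply cR_const ].

Ltac mono_cont :=
  repeat match goal with
  | |- continuous (fun y => Cmult _ _) _ => apply cC_mult
  | |- continuous (fun y => Cpow _ _) _ => apply cC_pow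
  | |- continuous (fun y => Cconj _) _ => apply cC_conj
  | |- continuous (fun y => U (z1f y)) _ => apply cC_U; [apply cz1|apply nz_of_rr'; lra]
  | |- continuous (fun y => U (z2f y)) _ => apply cC_U; [apply cz2|apply nz_of_rr'; lra]
  | |- continuous (fun y => U (z3f y)) _ => apply cC_U; [apply cz3|apply nz_of_rr'; lra]
  end.

Lemma cW1 : continuous (fun y => W1 p (z1f y) (z2f y) (z3f y)) v.
Proof.
  unfold W1. apply cC_plus; [apply cC_plus; [apply cC_plus|]|].
  - apply (term_cont (fun y => cO (rr (z1f y)) (rr (z2f y)) (rr (z3f y))) (fun y => mO p (z1f y))).
    + unfold cO. coef_cont.
    + unfold cO. repeat apply Rmult_le_pos; apply pp_nonneg.
    + intros H. unfold cO in H. apply pos3_inv in H. unfold mO. unfold ka in H. mono_cont.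
    + intros y. unfold mO. le1_tac.
  - apply (term_cont (fun y => cA (rr (z1f y)) (rr (z2f y)) (rr (z3f y))) (fun y => mA p (z2f y))).
    + unfold cA. coef_cont.
    + unfold cA. repeat apply Rmult_le_pos; apply pp_nonneg.
    + intros H. unfold cA in H. apply pos3_inv in H. unfold mA. unfold ka in H. mono_cont.
    + intros y. unfold mA. le1_tac.
  - apply (term_cont (fun y => cB (rr (z1f y)) (rr (z2f y)) (rr (z3f y))) (fun y => mB p (z3f y))).
    + unfold cB. coef_cont.
    + unfold cB. repeat apply Rmult_le_pos; apply pp_nonneg.
    + intros H. unfold cB in H. apply pos3_inv in H. unfold mB. unfold ka in H. mono_cont.
    + intros y. unfold mB. le1_tac.
  - apply cC_mult; [apply cC_const|].
    apply (term_cont (fun y => cZ (rr (z1f y)) (rr (z2f y)) (rr (z3f y))) (fun y => mZ p (z1f y) (z2f y) (z3f y))).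
    + unfold cZ. coef_cont.
    + unfold cZ. repeat apply Rmult_le_pos; apply pp_nonneg.
    + intros H. unfold cZ in H. apply pos3_inv in H. unfold mZ. unfold zz in H. mono_cont.
    + intros y. unfold mZ. le1_tac.
Qed.

Lemma cW2 : continuous (fun y => W2 p (z1f y) (z2f y) (z3f y)) v.
Proof.
  unfold W2. apply cC_plus; [apply cC_plus|].
  - apply (term_cont (fun y => ca (rr (z1f y)) (rr (z2f y)) (rr (z3f y))) (fun y => na p (z1f y) (z2f y))).
    + unfold ca. coef_cont.
    + unfold ca. repeat apply Rmult_le_pos; apply pp_nonneg.
    + intros H. unfold ca in H. apply pos4_inv in H. unfold na. unfold et in H. mono_cont.
    + intros y. unfold na. le1_tac.
  - apply (term_cont (fun y => cb (rr (z1f y)) (rr (z2f y)) (rr (z3f y))) (fun y => nb p (z1f y) (z3f y))).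
    + unfold cb. coef_cont.
    + unfold cb. repeat apply Rmult_le_pos; apply pp_nonneg.
    + intros H. unfold cb in H. apply pos4_inv in H. unfold nb. unfold et in H. mono_cont.
    + intros y. unfold nb. le1_tac.
  - apply (term_cont (fun y => cc (rr (z1f y)) (rr (z2f y)) (rr (z3f y))) (fun y => nc p (z2f y) (z3f y))).
    + unfold cc. coef_cont.
    + unfold cc. repeat apply Rmult_le_pos; apply pp_nonneg.
    + intros H. unfold cc in H. apply pos4_inv in H. unfold nc. unfold et in H. mono_cont.
    + intros y. unfold nc. le1_tac.
Qed.
End MC.

Lemma cR_pow2 {T : UniformSpace} (f : T -> R) x : continuous f x -> continuous (fun y => f y ^ 2) x.
Proof.
  intros H. apply continuous_ext with (f := fun y => f y * f y).
  - intros y. change (f y * f y = f y ^ 2). ring.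
  - apply cR_mult; auto.
Qed.

Lemma fmap_cont p v : SV3 v -> continuous (fmap p) v.
Proof.
  intros Hv.
  assert (Hnz : ~ (W1 p (fst (fst v)) (snd (fst v)) (snd v) = RtoC 0 /\ W2 p (fst (fst v)) (snd (fst v)) (snd v) = RtoC 0)).
  { destruct v as [[z1 z2] z3]. apply W_nonzero. exact Hv. }
  assert (HN : 0 < Nn p (fst (fst v)) (snd (fst v)) (snd v)).
  { unfold Nn. apply sqrt_lt_R0.
    set (a := Cmod (W1 p (fst (fst v)) (snd (fst v)) (snd v))).
    set (b := Cmod (W2 p (fst (fst v)) (snd (fst v)) (snd v))).
    destruct (Req_dec a 0) as [Ha|Ha].
    - assert (b <> 0).
      { intro Hb. apply Hnz. split; apply Cmod_eq_0; auto. }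
      pose proof (pow2_ge_0 a). assert (0 < b ^ 2) by (apply pow2_gt_0; auto). lra.
    - pose proof (pow2_ge_0 b). assert (0 < a ^ 2) by (apply pow2_gt_0; auto). lra. }
  assert (cN : continuous (fun y => Nn p (fst (fst y)) (snd (fst y)) (snd y)) v).
  { unfold Nn. apply continuous_comp with (g := sqrt); [|apply continuous_sqrt].
    apply cR_plus; apply cR_pow2; apply cC_Cmod; [apply cW1|apply cW2]. }
  assert (cIN : continuous (fun y => RtoC (/ Nn p (fst (fst y)) (snd (fst y)) (snd y))) v).
  { apply cC_RtoC. apply continuous_comp with (g := fun r => / r); auto.
    apply continuous_Rinv. apply Rgt_not_eq. exact HN. }
  unfold fmap. apply cont_pair; apply cC_mult; auto; [apply cW1|apply cW2].
Qed.

Theorem proposition2p2 (p : nat) (hp : Znumtheory.prime (Z.of_nat p)) :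
  exists f : V3 -> W3,
    (forall v, SV3 v -> SW3 (f v)) /\
    (forall v, SV3 v -> filterlim f (within SV3 (locally v)) (locally (f v))) /\
    (forall (t : CC) (i : nat) (v : V3), in_S1 t -> SV3 v ->
       f (actV3 p t i v) = actW3 p t i (f v)).
Proof.
  assert (Hp : p <> 0%nat).
  { intro E. subst p. apply Znumtheory.not_prime_0. exact hp. }
  exists (fmap p). split; [|split].
  - intros v Hv. apply fmap_sphere, Hv.
  - intros v Hv. eapply filterlim_filter_le_1.
    + apply filter_le_within.
    + apply fmap_cont, Hv.
  - intros t i v Ht Hv. apply fmap_equiv; auto.
Qed.
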